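(* Assume $\alpha=\beta\ge1$ and $d_1=d_2$. Let $\mathbf U$ be the similarity profile and $\mathbf u$ a solution of the scaled system with $\mathcal E_{\mathrm B}(\mathbf u(0)|\mathbf U)<\infty$. Then $$\mathcal E_{\mathrm B}(\mathbf u(\tau)|\mathbf U)\le e^{-\tau/2}\,\mathcal E_{\mathrm B}(\mathbf u(0)|\mathbf U)\quad\text{for all }\tau>0.$$
   Context: Fix $d_1,d_2,k>0$, real stoichiometric coefficients $\alpha,\beta\ge1$ and $A_-,A_+>0$. The similarity profile is a triple $(U,V,\Lambda)$ with $U,V\in\mathrm C^2(\mathbb R)$ positive, bounded and bounded away from $0$, $\Lambda:\mathbb R\to\mathbb R$, satisfying $d_1U''+\tfrac y2U'+\alpha\Lambda=0$, $d_2V''+\tfrac y2V'-\beta\Lambda=0$, $U^\alpha=V^\beta$ on $\mathbb R$, and $U(\pm\infty)=A_\pm^\beta$, $V(\pm\infty)=A_\pm^\alpha$. The scaled system is $u_\tau=d_1u_{yy}+\tfrac y2u_y+e^\tau\alpha k(v^\beta-u^\alpha)$, $v_\tau=d_2v_{yy}+\tfrac y2v_y-e^\tau\beta k(v^\beta-u^\alpha)$ for $\tau>0$, $y\in\mathbb R$, with $(u,v)(\tau,\pm\infty)=(A_\pm^\beta,A_\pm^\alpha)$. A ''solution'' is a positive classical solution for which the relative entropy is finite and differentiable in $\tau$ with differentiation under the integral allowed, all integrals appearing are finite, and integrations by parts over $\mathbb R$ produce no boundary terms ($\rho,\zeta\to1$ at $\pm\infty$ with sufficient decay). Relative densities $\rho=u/U$,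 $\zeta=v/V$. $\lambda_{\mathrm B}(z)=z\log z-z+1$. Relative Boltzmann entropy: $\mathcal E_{\mathrm B}(\mathbf u|\mathbf U)=\int_{\mathbb R}\big(\lambda_{\mathrm B}(\rho)U+\lambda_{\mathrm B}(\zeta)V\big)\mathrm dy$. *)

(* Defs.v *)
From Stdlib Require Import Reals.
From Coquelicot Require Import Coquelicot.
Open Scope R_scope.

Definition intR (f : R -> R) : R :=
  RInt_gen f (Rbar_locally m_infty) (Rbar_locally p_infty).
Definition integrableR (f : R -> R) : Prop :=
  ex_RInt_gen f (Rbar_locally m_infty) (Rbar_locally p_infty).

Definition lim_pm (f : R -> R) (l : R) : Prop :=
  is_lim f m_infty l /\ is_lim f p_infty l.

Definition d_tau (w : R -> R -> R) (t y : R) : R := Derive (fun s => w s y) t.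
Definition d_y (w : R -> R -> R) (t y : R) : R := Derive (fun z => w t z) y.
Definition d_yy (w : R -> R -> R) (t y : R) : R := Derive (fun z => d_y w t z) y.

Definition lamB (z : R) : R := z * ln z - z + 1.

Definition entIntegrand (u v : R -> R -> R) (U V : R -> R) (t y : R) : R :=
  lamB (u t y / U y) * U y + lamB (v t y / V y) * V y.
Definition relEntB (u v : R -> R -> R) (U V : R -> R) (t : R) : R :=
  intR (entIntegrand u v U V t).

Definition C2 (f : R -> R) : Prop :=
  (forall y, ex_derive f y) /\ (forall y, ex_derive (Derive f) y) /\
  (forall y, continuous (Derive (Derive f)) y).

Definition pos_bdd (f : R -> R) : Prop :=
  exists m M : R, 0 < m /\ forall y, m <= f y <= M.

Definition similarity_profile (d1 d2 alpha beta Am Ap : R)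
    (U V Lam : R -> R) : Prop :=
  C2 U /\ C2 V /\ pos_bdd U /\ pos_bdd V /\
  (forall y, d1 * Derive (Derive U) y + y / 2 * Derive U y + alpha * Lam y = 0) /\
  (forall y, d2 * Derive (Derive V) y + y / 2 * Derive V y - beta * Lam y = 0) /\
  (forall y, Rpower (U y) alpha = Rpower (V y) beta) /\
  is_lim U m_infty (Rpower Am beta) /\ is_lim U p_infty (Rpower Ap beta) /\
  is_lim V m_infty (Rpower Am alpha) /\ is_lim V p_infty (Rpower Ap alpha).

(* Technical conditions on one component w (= u or v) of a solution, with
   reference profile W, diffusion d and reaction term  c * e^t * (v^beta-u^alpha)
   (c = alpha k for u, c = - beta k for v), at a fixed time t > 0.
   Here rho = w/W is the relative density.  These are the finiteness of the
   integrals appearing in the entropy computation and the vanishing of the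
   boundary terms of the integrations by parts performed over R. *)
Definition component_ok (d c alpha beta : R) (u v w : R -> R -> R)
    (W : R -> R) (t : R) : Prop :=
  let rho := fun y => w t y / W y in
  let rho' := fun y => Derive rho y in
  lim_pm rho 1 /\
  lim_pm (fun y => ln (rho y) * d_y w t y) 0 /\
  lim_pm (fun y => y * w t y * ln (rho y)) 0 /\
  lim_pm (fun y => (rho y - 1) * Derive W y) 0 /\
  lim_pm (fun y => y * W y * (rho y - 1)) 0 /\
  integrableR (fun y => lamB (rho y) * W y) /\
  integrableR (fun y => ln (rho y) * d_tau w t y) /\
  integrableR (fun y => ln (rho y) * d_yy w t y) /\
  integrableR (fun y => ln (rho y) * (y * d_y w t y)) /\
  integrableR (fun y => ln (rho y) *
      (exp t * c * (Rpower (v t y) beta - Rpower (u t y) alpha))) /\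
  integrableR (fun y => rho' y / rho y * d_y w t y) /\
  integrableR (fun y => rho' y / rho y * (y * w t y)) /\
  integrableR (fun y => w t y * ln (rho y)) /\
  integrableR (fun y => W y * (rho' y) ^ 2 / rho y) /\
  integrableR (fun y => rho' y * Derive W y) /\
  integrableR (fun y => y * W y * rho' y) /\
  integrableR (fun y => (rho y - 1) * W y) /\
  integrableR (fun y => (rho y - 1) * Derive (Derive W) y) /\
  integrableR (fun y => (rho y - 1) * (y * Derive W y)).

Definition classical (w : R -> R -> R) : Prop :=
  (forall t y, 0 <= t -> 0 < w t y) /\
  (forall t y, 0 <= t -> continuous (fun z => w t z) y) /\
  (forall t y, 0 < t ->
     ex_derive (fun s => w s y) t /\
     ex_derive (fun z => w t z) y /\
     ex_derive (fun z => d_y w t z) y /\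
     continuous (fun p : R * R => w (fst p) (snd p)) (t, y) /\
     continuous (fun p : R * R => d_tau w (fst p) (snd p)) (t, y) /\
     continuous (fun p : R * R => d_y w (fst p) (snd p)) (t, y) /\
     continuous (fun p : R * R => d_yy w (fst p) (snd p)) (t, y)).

Definition scaled_solution (d1 d2 k alpha beta Am Ap : R)
    (U V : R -> R) (u v : R -> R -> R) : Prop :=
  classical u /\ classical v /\
  (forall t y, 0 < t ->
     d_tau u t y = d1 * d_yy u t y + y / 2 * d_y u t y
                   + exp t * alpha * k * (Rpower (v t y) beta - Rpower (u t y) alpha)) /\
  (forall t y, 0 < t ->
     d_tau v t y = d2 * d_yy v t y + y / 2 * d_y v t y
                   - exp t * beta * k * (Rpower (v t y) beta - Rpower (u t y) alpha)) /\
  (forall t, 0 < t ->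
     is_lim (fun y => u t y) m_infty (Rpower Am beta) /\
     is_lim (fun y => u t y) p_infty (Rpower Ap beta) /\
     is_lim (fun y => v t y) m_infty (Rpower Am alpha) /\
     is_lim (fun y => v t y) p_infty (Rpower Ap alpha)) /\
  (forall t, 0 < t -> integrableR (entIntegrand u v U V t)) /\
  (forall t, 0 < t ->
     is_derive (relEntB u v U V) t
       (intR (fun y => ln (u t y / U y) * d_tau u t y
                       + ln (v t y / V y) * d_tau v t y))) /\
  filterlim (relEntB u v U V) (at_right 0) (locally (relEntB u v U V 0)) /\
  (forall t, 0 < t ->
     component_ok d1 (alpha * k) alpha beta u v u U t /\
     component_ok d2 (- (beta * k)) alpha beta u v v V t).

(* Main.v *)
Require Import Defs.
From Stdlib Require Import Reals Lra.
From Coquelicot Require Import Coquelicot.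
Open Scope R_scope.

Lemma intR_correct f : integrableR f ->
  is_RInt_gen f (Rbar_locally m_infty) (Rbar_locally p_infty) (intR f).
Proof. unfold intR, integrableR; intros H; exact (RInt_gen_correct f H). Qed.

Lemma intR_unique f l :
  is_RInt_gen f (Rbar_locally m_infty) (Rbar_locally p_infty) l -> intR f = l.
Proof. unfold intR; intros H; exact (is_RInt_gen_unique f l H). Qed.

Lemma intR_plus f g : integrableR f -> integrableR g ->
  intR (fun y => f y + g y) = intR f + intR g.
Proof.
  intros Hf Hg; apply intR_unique.
  apply (is_RInt_gen_plus f g); apply intR_correct; assumption.
Qed.

Lemma integrable_plus f g : integrableR f -> integrableR g ->
  integrableR (fun y => f y + g y).
Proof.
  intros Hf Hg; eexists.
  apply (is_RInt_gen_plus f g); apply intR_correct; eassumption.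
Qed.

Lemma intR_scal k f : integrableR f ->
  intR (fun y => k * f y) = k * intR f.
Proof.
  intros Hf; apply intR_unique.
  apply (is_RInt_gen_scal f k); apply intR_correct; assumption.
Qed.

Lemma integrable_scal k f : integrableR f -> integrableR (fun y => k * f y).
Proof.
  intros Hf; eexists.
  apply (is_RInt_gen_scal f k); apply intR_correct; eassumption.
Qed.

Lemma integrable_ext f g : (forall y, f y = g y) -> integrableR f -> integrableR g.
Proof. intros H Hf; eapply ex_RInt_gen_ext_eq; eassumption. Qed.

Lemma intR_ext f g : (forall y, f y = g y) -> integrableR f -> intR f = intR g.
Proof. intros H Hf; unfold intR; apply RInt_gen_ext_eq; assumption. Qed.

Lemma intR_ge0 f : integrableR f -> (forall y, 0 <= f y) -> 0 <= intR f.
Proof.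
  intros Hf Hpos.
  assert (H0 := is_RInt_gen_scal f 0 _ (intR_correct f Hf)).
  assert (Hle : norm (scal 0 (intR f)) <= intR f).
  { apply (RInt_gen_norm (Fa := Rbar_locally m_infty) (Fb := Rbar_locally p_infty) (fun y => scal 0 (f y)) f _ _).
    - apply (Filter_prod _ _ _ (fun a => a < 0) (fun b => 0 < b)).
      + simpl; exists 0; intros; lra.
      + simpl; exists 0; intros; lra.
      + simpl; intros; lra.
    - apply (Filter_prod _ _ _ (fun a => True) (fun b => True)).
      + simpl; exists 0; auto.
      + simpl; exists 0; auto.
      + intros x y _ _ z _. change (norm (scal 0 (f z))) with (Rabs (0 * f z)). rewrite Rmult_0_l, Rabs_R0. apply Hpos.
    - exact H0.
    - apply intR_correct; exact Hf. }
  change (norm (scal 0 (intR f))) with (Rabs (0 * intR f)) in Hle; rewrite Rmult_0_l, Rabs_R0 in Hle. exact Hle.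
Qed.

Lemma intR_deriv0 G g : (forall y, is_derive G y (g y)) ->
  (forall y, continuous g y) -> lim_pm G 0 ->
  is_RInt_gen g (Rbar_locally m_infty) (Rbar_locally p_infty) 0.
Proof.
  intros Hd Hc [Hm Hp].
  assert (HD : forall y, Derive G y = g y) by (intro y; apply is_derive_unique, Hd).
  assert (H := is_RInt_gen_Derive (Fa := Rbar_locally m_infty) (Fb := Rbar_locally p_infty) G 0 0).
  replace 0 with (0 - 0) by ring.
  apply (is_RInt_gen_ext (Derive G)).
  - apply (Filter_prod _ _ _ (fun a => True) (fun b => True)).
    + simpl; exists 0; auto.
    + simpl; exists 0; auto.
    + intros; apply HD.
  - apply H.
    + apply (Filter_prod _ _ _ (fun a => True) (fun b => True)).
      * simpl; exists 0; auto.
      * simpl; exists 0; auto.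
      * intros; eexists; apply Hd.
    + apply (Filter_prod _ _ _ (fun a => True) (fun b => True)).
      * simpl; exists 0; auto.
      * simpl; exists 0; auto.
      * intros. apply (continuous_ext g). intro; symmetry; apply HD. apply Hc.
    + exact Hm.
    + exact Hp.
Qed.
Lemma G_deriv (f f1 f2 W W1 W2 : R -> R) d y :
 is_derive f y (f1 y) -> is_derive f1 y (f2 y) -> is_derive W y (W1 y) ->
 is_derive W1 y (W2 y) -> 0 < f y -> 0 < W y -> d * W2 y + y / 2 * W1 y = 0 ->
 is_derive (fun z => ln (f z / W z) * (d * f1 z + z * f z / 2)
                     - (f z / W z - 1) * (d * W1 z + z * W z / 2)) y
  (ln (f y / W y) * (d * f2 y + y / 2 * f1 y)
   + d * (W y * ((f1 y * W y - f y * W1 y) / (W y)^2)^2 / (f y / W y))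
   + /2 * (lamB (f y / W y) * W y)).
Proof.
  intros Hf Hf1 HW HW1 fp Wp HODE.
  auto_derive.
  - change (fun x : R => f x) with f; change (fun x : R => W x) with W;
    change (fun x : R => f1 x) with f1.
    repeat split; try (eexists; eassumption); try lra.
    apply Rmult_lt_0_compat; [lra| apply Rinv_0_lt_compat; lra].
  - change (fun x : R => f x) with f; change (fun x : R => W x) with W;
    change (fun x : R => f1 x) with f1; change (fun x : R => W1 x) with W1.
    rewrite (is_derive_unique _ _ _ Hf), (is_derive_unique _ _ _ Hf1),
      (is_derive_unique _ _ _ HW), (is_derive_unique _ _ _ HW1).
    unfold lamB, Rdiv.
    set (L := ln (f y * / W y)).
    apply Rminus_diag_uniq.
    transitivity (-(f y * / W y - 1) * (d*W2 y + y * /2*W1 y)).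
    + field. split; lra.
    + unfold Rdiv in HODE; rewrite HODE; ring.
Qed.
Lemma cont_pt_of f y : continuous f y -> continuity_pt f y.
Proof. intro H; apply continuity_pt_filterlim; exact H. Qed.
Lemma cont_of_pt f y : continuity_pt f y -> continuous f y.
Proof. intro H; apply continuity_pt_filterlim; exact H. Qed.
Lemma cont_pt_der f y : ex_derive f y -> continuity_pt f y.
Proof. intro H; apply cont_pt_of; exact (ex_derive_continuous f y H). Qed.

Lemma g_cont (f f1 f2 W W1 : R -> R) d y :
  (forall y, ex_derive f y) -> (forall y, ex_derive f1 y) ->
  (forall y, ex_derive W y) -> (forall y, ex_derive W1 y) ->
  continuous f2 y -> (forall y, 0 < f y) -> (forall y, 0 < W y) ->
  continuous (fun y => ln (f y / W y) * (d * f2 y + y / 2 * f1 y)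
   + d * (W y * ((f1 y * W y - f y * W1 y) / (W y)^2)^2 / (f y / W y))
   + /2 * (lamB (f y / W y) * W y)) y.
Proof.
  intros Hf Hf1 HW HW1 Hc fp Wp.
  assert (pos : 0 < f y / W y) by (apply Rdiv_lt_0_compat; auto).
  apply cont_of_pt.
  apply (continuity_pt_plus (fun y => ln (f y / W y) * (d * f2 y + y / 2 * f1 y)
   + d * (W y * ((f1 y * W y - f y * W1 y) / (W y)^2)^2 / (f y / W y)))
     (fun y => /2 * (lamB (f y / W y) * W y))).
  apply (continuity_pt_plus (fun y => ln (f y / W y) * (d * f2 y + y / 2 * f1 y))
     (fun y =>  d * (W y * ((f1 y * W y - f y * W1 y) / (W y)^2)^2 / (f y / W y)))).
  apply (continuity_pt_mult (fun y => ln (f y / W y)) (fun y => (d * f2 y + y / 2 * f1 y))).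
  - apply cont_pt_der. auto_derive. specialize (Wp y).
    repeat split; auto; lra.
  - apply (continuity_pt_plus (fun y => d * f2 y) (fun y => y / 2 * f1 y)).
    + apply (continuity_pt_scal f2 d). apply cont_pt_of; exact Hc.
    + apply cont_pt_der. auto_derive. auto.
  - apply cont_pt_der. auto_derive. specialize (Wp y).
    repeat match goal with |- _ /\ _ => split end; auto; try lra; try (specialize (fp y); nra).
  - apply cont_pt_der. unfold lamB. auto_derive. specialize (Wp y).
    repeat match goal with |- _ /\ _ => split end; auto; try lra; try (specialize (fp y); nra).
Qed.

Lemma lim0_scal a f x : is_lim f x 0 -> is_lim (fun y => a * f y) x 0.
Proof.
  intro H. replace (Finite 0) with (Rbar_mult a 0).
  apply is_lim_scal_l; exact H. simpl. f_equal; ring.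
Qed.

Lemma lim0_plus f g x : is_lim f x 0 -> is_lim g x 0 -> is_lim (fun y => f y + g y) x 0.
Proof. intros H1 H2. replace 0 with (0+0) by ring. apply is_lim_plus'; auto. Qed.

Lemma rho_deriv (f f1 W W1 : R -> R) y :
  is_derive f y (f1 y) -> is_derive W y (W1 y) -> 0 < W y ->
  Derive (fun z => f z / W z) y = (f1 y * W y - f y * W1 y) / (W y)^2.
Proof.
  intros Hf HW Wp. apply is_derive_unique.
  auto_derive.
  - repeat match goal with |- _ /\ _ => split end; try (eexists; eassumption); auto; lra.
  - change (fun x : R => f x) with f; change (fun x : R => W x) with W.
    rewrite (is_derive_unique _ _ _ Hf), (is_derive_unique _ _ _ HW). field. lra.
Qed.

Lemma lim_comb (A B C D G : R -> R) a b c e :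
  lim_pm A 0 -> lim_pm B 0 -> lim_pm C 0 -> lim_pm D 0 ->
  (forall y, G y = a * A y + b * B y + c * C y + e * D y) -> lim_pm G 0.
Proof.
  intros [A1 A2] [B1 B2] [C1 C2] [D1 D2] HG. split;
  (apply (is_lim_ext (fun y => a * A y + b * B y + c * C y + e * D y));
   [intro; symmetry; apply HG|]);
  repeat apply lim0_plus; apply lim0_scal; assumption.
Qed.

Lemma component (d c alpha beta : R) (u v w : R -> R -> R) (W : R -> R) (t : R) :
  0 < t -> 0 < d -> classical w -> C2 W -> (forall y, 0 < W y) ->
  (forall y, d * Derive (Derive W) y + y / 2 * Derive W y = 0) ->
  (forall y, d_tau w t y = d * d_yy w t y + y / 2 * d_y w t y
       + exp t * c * (Rpower (v t y) beta - Rpower (u t y) alpha)) ->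
  component_ok d c alpha beta u v w W t ->
  intR (fun y => ln (w t y / W y) * d_tau w t y) <=
    - /2 * intR (fun y => lamB (w t y / W y) * W y)
    + intR (fun y => ln (w t y / W y) *
         (exp t * c * (Rpower (v t y) beta - Rpower (u t y) alpha))).
Proof.
  intros tp dp [wpos [wcont wreg]] [HW1 [HW2 HW3]] Wp HODE HPDE Hok.
  unfold component_ok in Hok; cbv zeta in Hok.
  destruct Hok as [Lr [L1 [L2 [L3 [L4 [Ilam [Itau [Iyy [Iy [Ireac [I5 [I6 [I7 [Idiss
     [I8 [I9 [I10 [I11 I12]]]]]]]]]]]]]]]]]].
  set (f := fun z => w t z).
  set (f1 := fun z => d_y w t z).
  set (f2 := fun z => d_yy w t z).
  set (W1 := Derive W).
  set (W2 := Derive (Derive W)).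
  assert (Hf : forall y, is_derive f y (f1 y)).
  { intro y. apply Derive_correct. apply (wreg t y tp). }
  assert (Hf1 : forall y, is_derive f1 y (f2 y)).
  { intro y. apply Derive_correct. apply (wreg t y tp). }
  assert (HWd : forall y, is_derive W y (W1 y)).
  { intro y. apply Derive_correct. apply HW1. }
  assert (HW1d : forall y, is_derive W1 y (W2 y)).
  { intro y. apply Derive_correct. apply HW2. }
  assert (fp : forall y, 0 < f y) by (intro y; apply wpos; lra).
  assert (Hc2 : forall y, continuous f2 y).
  { intro y. destruct (wreg t y tp) as [_ [_ [_ [_ [_ [_ H]]]]]].
    apply (continuous_comp_2 (fun _ => t) (fun z => z) (d_yy w)).
    apply continuous_const. apply continuous_id. exact H. }
  set (g := fun y => ln (f y / W y) * (d * f2 y + y / 2 * f1 y)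
   + d * (W y * ((f1 y * W y - f y * W1 y) / (W y)^2)^2 / (f y / W y))
   + /2 * (lamB (f y / W y) * W y)).
  assert (Hg : is_RInt_gen g (Rbar_locally m_infty) (Rbar_locally p_infty) 0).
  { apply (intR_deriv0 (fun z => ln (f z / W z) * (d * f1 z + z * f z / 2)
                     - (f z / W z - 1) * (d * W1 z + z * W z / 2))).
    - intro y. apply G_deriv with (W2 := W2); auto.
    - intro y. apply g_cont; auto; intro; eexists; eauto.
    - apply (lim_comb _ _ _ _ _ d (/2) (-d) (-/2) L1 L2 L3 L4).
      intro y. unfold f, f1, W1. unfold Rdiv; ring. }
  assert (Ig : integrableR g) by (eexists; exact Hg).
  assert (Ig0 : intR g = 0) by (apply intR_unique; exact Hg).
  set (Diss := fun y => W y * Derive (fun y0 : R => w t y0 / W y0) y ^ 2 / (w t y / W y)).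
  set (Lam := fun y => lamB (w t y / W y) * W y).
  set (Reac := fun y => ln (w t y / W y) *
         (exp t * c * (Rpower (v t y) beta - Rpower (u t y) alpha))).
  assert (Hpt : forall y, ln (w t y / W y) * d_tau w t y =
                  g y + ((-d) * Diss y + ((- /2) * Lam y + Reac y))).
  { intro y. unfold g, Diss, Lam, Reac.
    rewrite (rho_deriv f f1 W W1 y (Hf y) (HWd y) (Wp y) : Derive (fun y0 : R => w t y0 / W y0) y = _).
    rewrite HPDE. unfold f, f1, f2. field.
    split. apply Rgt_not_eq, Wp. specialize (fp y); unfold f in fp; lra. }
  eapply Rle_trans; [right; apply (intR_ext _ _ Hpt Itau)|].
  rewrite intR_plus; auto.
  2:{ apply integrable_plus. apply integrable_scal; exact Idiss.
      apply integrable_plus. apply integrable_scal; exact Ilam. exact Ireac. }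
  rewrite intR_plus.
  2:{ apply integrable_scal; exact Idiss. }
  2:{ apply integrable_plus. apply integrable_scal; exact Ilam. exact Ireac. }
  rewrite intR_plus.
  2:{ apply integrable_scal; exact Ilam. }
  2:{ exact Ireac. }
  rewrite !intR_scal; auto.
  rewrite Ig0.
  assert (0 <= intR Diss).
  { apply intR_ge0. exact Idiss. intro y. unfold Diss.
    specialize (Wp y). assert (0 < w t y) by (apply wpos; lra).
    unfold Rdiv. apply Rmult_le_pos. apply Rmult_le_pos. lra. apply pow2_ge_0.
    apply Rlt_le, Rinv_0_lt_compat, Rmult_lt_0_compat. lra. apply Rinv_0_lt_compat; lra. }
  change (intR (fun y : R => lamB (f y / W y) * W y)) with (intR Lam).
  change (intR (fun y : R => ln (f y / W y) * (exp t * c * (Rpower (v t y) beta - Rpower (u t y) alpha)))) with (intR Reac).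
  nra.
Qed.
Lemma exp_le_mono x y : x <= y -> exp x <= exp y.
Proof. intros [H|H]. left; apply exp_increasing; exact H. subst; lra. Qed.

Lemma react_sign a p q : 0 < a -> 0 < p -> 0 < q ->
  (Rpower q a - Rpower p a) * (ln p - ln q) <= 0.
Proof.
  intros ha hp hq. unfold Rpower.
  destruct (Rle_dec (ln p) (ln q)) as [H|H].
  - assert (exp (a * ln p) <= exp (a * ln q)) by (apply exp_le_mono; nra). nra.
  - assert (exp (a * ln q) <= exp (a * ln p)) by (apply exp_le_mono; nra). nra.
Qed.

Lemma gronwall (E dE : R -> R) :
  (forall t, 0 < t -> is_derive E t (dE t)) ->
  (forall t, 0 < t -> dE t <= - E t / 2) ->
  filterlim E (at_right 0) (locally (E 0)) ->
  forall tau, 0 < tau -> E tau <= exp (- tau / 2) * E 0.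
Proof.
  intros Hd Hle Hlim tau htau.
  set (F := fun s => exp (s / 2) * E s).
  assert (HdF : forall s, 0 < s -> is_derive F s (exp (s/2) * (E s / 2 + dE s))).
  { intros s hs. unfold F. auto_derive.
    - eexists; apply Hd; exact hs.
    - change (fun x : R => E x) with E. rewrite (is_derive_unique _ _ _ (Hd s hs)). unfold Rdiv; ring. }
  assert (Hmono : forall s, 0 < s < tau -> F tau <= F s).
  { intros s [hs1 hs2].
    destruct (MVT_gen F s tau (fun x => exp (x/2) * (E x / 2 + dE x))) as [c [hc Hc]].
    - intros x hx. apply HdF. rewrite Rmin_left in hx by lra. lra.
    - intros x hx. rewrite Rmin_left in hx by lra.
      apply continuity_pt_filterlim.
      exact (ex_derive_continuous F x (ex_intro _ _ (HdF x ltac:(lra)))).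
    - rewrite Rmin_left, Rmax_right in hc by lra.
      assert (dE c <= - E c / 2) by (apply Hle; lra).
      assert (0 < exp (c/2)) by apply exp_pos.
      assert (exp (c / 2) * (E c / 2 + dE c) <= 0).
      { apply Rmult_le_0_l; lra. }
      nra. }
  assert (HlimF0 : filterlim F (at_right 0) (locally (exp (0/2) * E 0))).
  { unfold F.
    apply (filterlim_comp_2 (G := locally (exp (0/2))) (H := locally (E 0)) (fun s => exp (s/2)) E Rmult).
    - intros P HP.
      assert (Hc : continuous (fun s => exp (s/2)) 0).
      { assert (He : ex_derive (fun s => exp (s/2)) 0) by (auto_derive; auto).
        exact (ex_derive_continuous _ _ He). }
      specialize (Hc P HP). simpl. unfold at_right, within.
      unfold filtermap in *. apply (filter_imp (fun s => P (exp (s/2)))); [auto | exact Hc].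
    - exact Hlim.
    - apply (filterlim_mult (K := R_AbsRing)). }
  assert (Heq : exp (0/2) * E 0 = E 0)
    by (replace (0/2) with 0 by field; rewrite exp_0; ring).
  rewrite Heq in HlimF0. rename HlimF0 into HlimF.
  assert (F tau <= E 0).
  { apply Rnot_lt_le. intro Hlt.
    set (eps := mkposreal _ (Rlt_Rminus _ _ Hlt)).
    assert (H1 := HlimF _ (locally_ball (E 0) eps)).
    assert (H2 : at_right 0 (fun s => 0 < s < tau)).
    { unfold at_right, within. exists (mkposreal _ htau). intros y hy hpos.
      split; auto. change (Rabs (y - 0) < tau) in hy.
      apply Rabs_lt_between in hy. lra. }
    assert (H1' : at_right 0 (fun s => ball (E 0) eps (F s))) by exact H1.
    destruct (@Hierarchy.filter_ex _ _ (at_right_proper_filter 0) _ (filter_and _ _ H1' H2))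
      as [s [Hb Hs]].
    change (Rabs (F s - E 0) < F tau - E 0) in Hb.
    apply Rabs_lt_between in Hb.
    specialize (Hmono s Hs). lra. }
  unfold F in H.
  assert (Hexp : exp (- tau / 2) * exp (tau / 2) = 1).
  { rewrite <- exp_plus. replace (- tau / 2 + tau / 2) with 0 by field. apply exp_0. }
  assert (0 < exp (- tau / 2)) by apply exp_pos.
  replace (E tau) with (exp (- tau / 2) * (exp (tau / 2) * E tau)).
  - apply Rmult_le_compat_l; lra.
  - rewrite <- Rmult_assoc, Hexp; ring.
Qed.

Theorem mainTheorem7 (d1 d2 k alpha beta Am Ap : R)
  (U V Lam : R -> R) (u v : R -> R -> R)
  (hd1 : 0 < d1) (hd2 : 0 < d2) (hk : 0 < k)
  (halpha : 1 <= alpha) (hbeta : 1 <= beta)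
  (hAm : 0 < Am) (hAp : 0 < Ap)
  (hab : alpha = beta) (hdd : d1 = d2)
  (hprof : similarity_profile d1 d2 alpha beta Am Ap U V Lam)
  (hsol : scaled_solution d1 d2 k alpha beta Am Ap U V u v)
  (h0 : integrableR (entIntegrand u v U V 0)) :
  forall tau, 0 < tau ->
    relEntB u v U V tau <= exp (- tau / 2) * relEntB u v U V 0.
Proof.
  destruct hprof as [C2U [C2V [[mU [MU [hmU HU]]] [[mV [MV [hmV HV]]]
     [eqU [eqV [eqUV _]]]]]]].
  destruct hsol as [clu [clv [pdeu [pdev [_ [_ [hder [hcont hok]]]]]]]].
  subst beta d2.
  assert (Up : forall y, 0 < U y) by (intro y; specialize (HU y); lra).
  assert (Vp : forall y, 0 < V y) by (intro y; specialize (HV y); lra).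
  assert (UV : forall y, U y = V y).
  { intro y. apply ln_inv; auto. specialize (eqUV y). unfold Rpower in eqUV.
    apply exp_inv in eqUV. apply (Rmult_eq_reg_l alpha); lra. }
  assert (UV1 : forall y, Derive U y = Derive V y) by (intro y; apply Derive_ext; auto).
  assert (UV2 : forall y, Derive (Derive U) y = Derive (Derive V) y)
    by (intro y; apply Derive_ext; auto).
  assert (Lam0 : forall y, Lam y = 0).
  { intro y. specialize (eqU y); specialize (eqV y). rewrite UV1, UV2 in eqU.
    apply (Rmult_eq_reg_l (2 * alpha)); lra. }
  assert (ODEU : forall y, d1 * Derive (Derive U) y + y / 2 * Derive U y = 0).
  { intro y. specialize (eqU y). rewrite Lam0 in eqU. lra. }
  assert (ODEV : forall y, d1 * Derive (Derive V) y + y / 2 * Derive V y = 0).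
  { intro y. specialize (eqV y). rewrite Lam0 in eqV. lra. }
  apply (gronwall (relEntB u v U V)
     (fun t => intR (fun y => ln (u t y / U y) * d_tau u t y
                       + ln (v t y / V y) * d_tau v t y))).
  - exact hder.
  - intros t tp.
    destruct (hok t tp) as [oku okv].
    assert (Itu := oku). assert (Itv := okv).
    unfold component_ok in Itu, Itv; cbv zeta in Itu, Itv.
    destruct Itu as [_ [_ [_ [_ [_ [Ilamu [Itauu [_ [_ [Ireacu _]]]]]]]]]].
    destruct Itv as [_ [_ [_ [_ [_ [Ilamv [Itauv [_ [_ [Ireacv _]]]]]]]]]].
    assert (Cu := component d1 (alpha * k) alpha alpha u v u U t tp hd1 clu C2U Up ODEU
      ltac:(intro y; rewrite (pdeu t y tp); ring) oku).
    assert (Cv := component d1 (- (alpha * k)) alpha alpha u v v V t tp hd1 clv C2V Vp ODEV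
      ltac:(intro y; rewrite (pdev t y tp); ring) okv).
    rewrite intR_plus by assumption.
    unfold relEntB, entIntegrand.
    rewrite intR_plus by assumption.
    assert (Hr : intR (fun y => ln (u t y / U y) * (exp t * (alpha * k) * (Rpower (v t y) alpha - Rpower (u t y) alpha)))
               + intR (fun y => ln (v t y / V y) * (exp t * - (alpha * k) * (Rpower (v t y) alpha - Rpower (u t y) alpha))) <= 0).
    { rewrite <- intR_plus by assumption.
      set (Xs := fun y => ln (u t y / U y) * (exp t * (alpha * k) * (Rpower (v t y) alpha - Rpower (u t y) alpha)) +
          ln (v t y / V y) * (exp t * - (alpha * k) * (Rpower (v t y) alpha - Rpower (u t y) alpha))).
      assert (IX : integrableR Xs) by (apply integrable_plus; assumption).
      assert (0 <= intR (fun y => -1 * Xs y)).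
      { apply intR_ge0.
        - apply integrable_scal; exact IX.
        - intro y. unfold Xs. rewrite <- (UV y).
          assert (0 < u t y) by (apply (proj1 clu); lra).
          assert (0 < v t y) by (apply (proj1 clv); lra).
          rewrite !ln_div by auto.
          assert (HS := react_sign alpha (u t y) (v t y) ltac:(lra) H H0).
          assert (0 < exp t * (alpha * k)) by (apply Rmult_lt_0_compat; [apply exp_pos | nra]).
          nra. }
      rewrite intR_scal in H by exact IX. lra. }
    lra.
  - exact hcont.
Qed.
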